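(* Let $m\ge1$, $C>0$, $\mathbf{y}\in\{-1,1\}^m$, let $\mathbf{Q}\in\mathbb{R}^{m\times m}$ be a symmetric positive semidefinite kernel matrix on the labeled nodes, let $\mathcal{T}$ be a finite set of test nodes with kernel values $Q_{ti}$ ($t\in\mathcal{T}$, $i\in[m]$). Let $\boldsymbol\alpha^*\in\mathcal{S}(\mathbf{y})$, $\hat p_t=\sum_{i=1}^m y_i\alpha_i^*Q_{ti}$ and assume $\hat p_t\ne0$ for all $t\in\mathcal{T}$. Set $M_{u_i}=\sum_{j}C|Q_{ij}|-1$, $M_{v_i}=\sum_jC|Q_{ij}|+1$ for $i\in[m]$, and $l_t=-C\sum_{i=1}^m|Q_{ti}|$, $h_t=C\sum_{i=1}^m|Q_{ti}|$ for $t\in\mathcal{T}$. Consider the MILP $$P_C(\mathbf{y}):\ \max\ \sum_{t\in\mathcal{T}}c_t$$ over the variables and subject to all constraints of the sample-wise MILP $P(\mathbf{y})$ (namely $\boldsymbol{\alpha},\tilde{\mathbf{y}},\mathbf{z},\mathbf{u},\mathbf{v}\in\mathbb{R}^m$, $\mathbf{y}',\mathbf{s},\mathbf{t}\in\{0,1\}^m$, $\mathbf{R}\in\mathbb{R}^{m\times m}$ with $\sum_i(1-y_i\tilde y_i)\le2\lfloor\epsilon m\rfloor$ and, for all $i,j\in[m]$: $\tilde y_i=2y_i'-1$; $\sum_jR_{ij}Q_{ij}-1-u_i+v_i=0$; $u_i,v_i\ge0$; $-C(1+\tilde y_i)\le R_{ij}+z_j\le C(1+\tilde y_i)$; $-C(1-\tilde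 y_i)\le R_{ij}-z_j\le C(1-\tilde y_i)$; $-\alpha_i\le z_i\le\alpha_i$; $\alpha_i-C(1-\tilde y_i)\le z_i\le C(1+\tilde y_i)-\alpha_i$; $u_i\le M_{u_i}s_i$; $\alpha_i\le C(1-s_i)$; $v_i\le M_{v_i}t_i$; $\alpha_i\ge Ct_i$), together with additional variables $c_t\in\{0,1\}$ and $p_t\in\mathbb{R}$ for $t\in\mathcal{T}$ and constraints: $p_t=\sum_{i=1}^m z_iQ_{ti}$ for all $t\in\mathcal{T}$; for all $t$ with $\hat p_t>0$: $p_t\le h_t(1-c_t)$ and $p_t\ge l_tc_t$; for all $t$ with $\hat p_t<0$: $p_t\ge l_t(1-c_t)$ and $p_t\le h_tc_t$. Then the optimal value of $P_C(\mathbf{y})$ equals the maximum number of test nodes that are simultaneously certifiably non-robust, i.e. $\max\big\{|\{t\in\mathcal{T}:\operatorname{sign}(\hat p_t)\sum_{i=1}^m\tilde y_i\alpha_iQ_{ti}\le 0\}| : \tilde{\mathbf{y}}\in\mathcal{A}(\mathbf{y}),\ \boldsymbol\alpha\in\mathcal{S}(\tilde{\mathbf{y}})\big\}$.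
   Context: Binary classification with $m$ labeled nodes. For $\tilde{\mathbf{y}}\in\{-1,1\}^m$, the bias-free kernel SVM dual is $D(\tilde{\mathbf{y}}):\ \min_{\boldsymbol\alpha}-\sum_i\alpha_i+\tfrac12\sum_{i,j}\tilde y_i\tilde y_j\alpha_i\alpha_jQ_{ij}$ s.t. $0\le\alpha_i\le C$ for all $i\in[m]$; $\mathcal{S}(\tilde{\mathbf{y}})$ is its set of optimal solutions; the prediction score of node $t$ is $p_t=\sum_i\tilde y_i\alpha_iQ_{ti}$ and the predicted class is its sign. The adversary with budget $\epsilon\in[0,1]$ chooses one $\tilde{\mathbf{y}}\in\mathcal{A}(\mathbf{y})=\{\tilde{\mathbf{y}}\in\{-1,1\}^m:\|\tilde{\mathbf{y}}-\mathbf{y}\|_0\le\lfloor\epsilon m\rfloor\}$ used for all test nodes simultaneously. A test node $t$ counts as non-robust under $(\tilde{\mathbf{y}},\boldsymbol\alpha)$ if $\operatorname{sign}(\hat p_t)p_t\le0$. *)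

(* Defs.v *)
From HB Require Import structures.
From mathcomp Require Import all_boot all_order all_algebra.
From mathcomp Require Import reals.
Set Implicit Arguments. Unset Strict Implicit. Unset Printing Implicit Defensive.
Import Order.TTheory GRing.Theory Num.Theory.
Local Open Scope ring_scope.

Section SVM.
Variable R : realType.

Definition pm1 (m : nat) (v : 'I_m -> R) := forall i, v i = 1 \/ v i = -1.
Definition binR (b : R) := b = 0 \/ b = 1.

Definition sym_psd (m : nat) (Q : 'M[R]_m) :=
  Q^T = Q /\ forall x : 'rV[R]_m, 0 <= (x *m Q *m x^T) 0 0.

(* bias-free kernel SVM dual objective for labels yt *)
Definition dual_obj (m : nat) (Q : 'M[R]_m) (yt a : 'I_m -> R) : R :=
  - (\sum_i a i) + 2^-1 * \sum_i \sum_j yt i * yt j * a i * a j * Q i j.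

Definition in_box (m : nat) (C : R) (a : 'I_m -> R) := forall i, 0 <= a i <= C.

Definition svm_opt (m : nat) (C : R) (Q : 'M[R]_m) (yt a : 'I_m -> R) :=
  in_box C a /\ forall b, in_box C b -> dual_obj Q yt a <= dual_obj Q yt b.

Definition budget (m : nat) (eps : R) : int := Num.floor (eps * m%:R).

Definition adm (m : nat) (eps : R) (y yt : 'I_m -> R) :=
  pm1 yt /\ (#|[set i | yt i != y i]|%:Z <= budget m eps).

Definition n_nonrobust (m : nat) (T : finType) (Qt : T -> 'I_m -> R)
    (phat : T -> R) (yt a : 'I_m -> R) : nat :=
  #|[set t | Num.sg (phat t) * (\sum_i yt i * a i * Qt t i) <= 0]|.

Definition PC_feasible (m : nat) (T : finType) (C eps : R) (y : 'I_m -> R)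
    (Q : 'M[R]_m) (Qt : T -> 'I_m -> R) (phat : T -> R)
    (alpha yt z u v yp s tt : 'I_m -> R) (Rm : 'I_m -> 'I_m -> R)
    (c p : T -> R) : Prop :=
  let Mu i := \sum_j C * `|Q i j| - 1 in
  let Mv i := \sum_j C * `|Q i j| + 1 in
  let l t := - (C * \sum_i `|Qt t i|) in
  let h t := C * \sum_i `|Qt t i| in
  [/\ (forall i, binR (yp i) /\ binR (s i) /\ binR (tt i)),
      \sum_i (1 - y i * yt i) <= 2 * (budget m eps)%:~R,
      (forall i, [/\ yt i = 2 * yp i - 1,
          \sum_j Rm i j * Q i j - 1 - u i + v i = 0,
          0 <= u i, 0 <= v i &
          [/\ -alpha i <= z i <= alpha i,
              alpha i - C * (1 - yt i) <= z i <= C * (1 + yt i) - alpha i,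
              u i <= Mu i * s i /\ alpha i <= C * (1 - s i) &
              v i <= Mv i * tt i /\ alpha i >= C * tt i]]),
      (forall i j, - (C * (1 + yt i)) <= Rm i j + z j <= C * (1 + yt i)
                /\ - (C * (1 - yt i)) <= Rm i j - z j <= C * (1 - yt i)) &
      forall t, [/\ binR (c t), p t = \sum_i z i * Qt t i,
          (0 < phat t -> p t <= h t * (1 - c t) /\ p t >= l t * c t) &
          (phat t < 0 -> p t >= l t * (1 - c t) /\ p t <= h t * c t)]].

End SVM.

(* Main.v *)
Require Import Defs.
From HB Require Import structures.
From mathcomp Require Import all_boot all_order all_algebra.
From mathcomp Require Import reals ring lra zify.
From Stdlib Require Classical_Prop.
Import Order.TTheory GRing.Theory Num.Theory.
Set Implicit Arguments. Unset Strict Implicit.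
Local Open Scope ring_scope.

Section L.
Variable R : realType.
Variable m : nat.
Variable Q : 'M[R]_m.
Hypothesis Qsym : forall i j, Q j i = Q i j.

Definition grad (yt a : 'I_m -> R) i := yt i * \sum_j yt j * a j * Q i j - 1.
Definition qf (yt d : 'I_m -> R) := \sum_i \sum_j yt i * yt j * d i * d j * Q i j.

Lemma dual_diff (yt a b d : 'I_m -> R) : (forall i, b i = a i + d i) ->
  dual_obj Q yt b - dual_obj Q yt a = \sum_i d i * grad yt a i + 2^-1 * qf yt d.
Proof.
move=> hb.
have key : \sum_i \sum_j yt i * yt j * b i * b j * Q i j =
   \sum_i \sum_j yt i * yt j * a i * a j * Q i j
   + (\sum_i \sum_j yt i * yt j * d i * a j * Q i j
   + \sum_i \sum_j yt j * yt i * d j * a i * Q j i) + qf yt d.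
  rewrite /qf -!big_split /=; apply: eq_bigr => i _.
  rewrite -!big_split /=; apply: eq_bigr => j _.
  rewrite !hb [Q j i]Qsym; ring.
have hs : \sum_i b i = \sum_i a i + \sum_i d i.
  by rewrite -big_split /=; apply: eq_bigr => i _; rewrite hb.
have hg : \sum_i d i * grad yt a i =
   \sum_i \sum_j yt i * yt j * d i * a j * Q i j - \sum_i d i.
  rewrite -sumrB; apply: eq_bigr => i _.
  rewrite /grad mulrBr mulr1 mulr_sumr mulr_sumr; congr (_ - _).
  by apply: eq_bigr => j _; ring.
have hsw : \sum_i \sum_j yt j * yt i * d j * a i * Q j i =
   \sum_i \sum_j yt i * yt j * d i * a j * Q i j.
  by rewrite (exchange_big _ _ _ _ _ (fun i j => yt j * yt i * d j * a i * Q j i)).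
rewrite /dual_obj key hs hg hsw.
set A := \sum_i \sum_j _. set X := \sum_i \sum_j _. set Y := \sum_i a i.
set Z := \sum_i d i. set W := qf yt d.
by field.
Qed.
Hypothesis Qpsd : forall x : 'rV[R]_m, 0 <= (x *m Q *m x^T) 0 0.
Lemma qf_ge0 yt d : 0 <= qf yt d.
Proof.
have := Qpsd (\row_j (yt j * d j)); rewrite !mxE.
suff -> : \sum_j (\row_j0 (yt j0 * d j0) *m Q) 0 j * (\row_j0 (yt j0 * d j0))^T j 0 = qf yt d by [].
under eq_bigr do rewrite !mxE mulr_suml.
rewrite /qf exchange_big /=; apply: eq_bigr => i _; apply: eq_bigr => j _.
rewrite !mxE; ring.
Qed.

Definition kkt (C : R) yt a := forall i, (a i < C -> 0 <= grad yt a i) /\ (0 < a i -> grad yt a i <= 0).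

Lemma kkt_opt C yt a : in_box C a -> kkt C yt a -> svm_opt C Q yt a.
Proof.
move=> ha hk; split=> // b hb.
rewrite -subr_ge0 (@dual_diff yt a b (fun i => b i - a i)); last first.
  by move=> i; rewrite addrC subrK.
apply: addr_ge0; last by apply: mulr_ge0; [rewrite invr_ge0 ler0n | exact: qf_ge0].
apply: sumr_ge0 => i _.
have [h1 h2] := hk i.
move: (hb i) (ha i) => /andP[hb0 hbC] /andP[ha0 haC].
case: (ltrgtP (a i) (b i)) => h.
- have := h1 (lt_le_trans h hbC); nra.
- have := h2 (le_lt_trans hb0 h); nra.
- by rewrite h subrr mul0r.
Qed.

Definition ev (i : 'I_m) (dl : R) := fun k : 'I_m => (k == i)%:R * dl.

Lemma sum_ev i dl (F : 'I_m -> R) : \sum_k ev i dl k * F k = dl * F i.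
Proof.
rewrite (bigD1 i) //= big1 ?addr0 => [|k /negbTE hk]; rewrite /ev ?hk ?eqxx.
  by rewrite mul1r.
by rewrite !mul0r.
Qed.

Lemma qf_ev yt i dl : qf yt (ev i dl) = dl ^+ 2 * (yt i * yt i * Q i i).
Proof.
rewrite /qf.
have -> : \sum_k \sum_j yt k * yt j * ev i dl k * ev i dl j * Q k j
   = \sum_k ev i dl k * (\sum_j yt k * yt j * ev i dl j * Q k j).
  apply: eq_bigr => k _; rewrite mulr_sumr; apply: eq_bigr => j _.
  rewrite /ev; case: (k == i); rewrite /= ?mul1r ?mul0r; ring.
rewrite sum_ev.
have -> : \sum_j yt i * yt j * ev i dl j * Q i j
   = \sum_j ev i dl j * (yt i * yt j * Q i j).
  by apply: eq_bigr => j _; ring.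
by rewrite sum_ev expr2; ring.
Qed.

Lemma opt_step C yt a i dl : svm_opt C Q yt a -> 0 <= a i + dl <= C ->
  0 <= dl * grad yt a i + 2^-1 * (dl ^+ 2 * (yt i * yt i * Q i i)).
Proof.
move=> [ha ho] hd.
have hb : in_box C (fun k => a k + ev i dl k).
  move=> k /=; rewrite /ev; case: (eqVneq k i) => [->|_].
    by rewrite mul1r.
  by rewrite mul0r addr0; exact: ha.
have := ho _ hb; rewrite -subr_ge0 (@dual_diff yt a _ (ev i dl)) //.
by rewrite sum_ev qf_ev.
Qed.

Lemma opt_kkt C yt a : svm_opt C Q yt a -> kkt C yt a.
Proof.
move=> ho i.
have hK : 0 <= yt i * yt i * Q i i.
  by have := qf_ge0 yt (ev i 1); rewrite qf_ev expr1n mul1r.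
set K := yt i * yt i * Q i i in hK.
set g := grad yt a i.
have hK1 : 0 < K + 1 by lra.
have ha := ho.1 i; move: ha => /andP[ha0 haC].
split => h.
- rewrite leNgt; apply/negP => hg.
  set Y := (- g) / (K + 1).
  have hY : Y * (K + 1) = - g by rewrite /Y divfK // gt_eqF.
  have hY0 : 0 < Y by rewrite /Y divr_gt0 // oppr_gt0.
  have [dl [hd0 [hd1 hd2]]] : exists dl, 0 < dl /\ dl <= C - a i /\ dl <= Y.
    case: (lerP Y (C - a i)) => hh; first by exists Y; lra.
    by exists (C - a i); lra.
  have hd : 0 <= a i + dl <= C by apply/andP; split; lra.
  have := opt_step ho hd; rewrite -/K -/g => H.
  have : dl * (K + 1) <= - g by nra.
  nra.
- rewrite leNgt; apply/negP => hg.
  set Y := g / (K + 1).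
  have hY : Y * (K + 1) = g by rewrite /Y divfK // gt_eqF.
  have hY0 : 0 < Y by rewrite /Y divr_gt0.
  have [dl [hd0 [hd1 hd2]]] : exists dl, 0 < dl /\ dl <= a i /\ dl <= Y.
    case: (lerP Y (a i)) => hh; first by exists Y; lra.
    by exists (a i); lra.
  have hd : 0 <= a i + - dl <= C by apply/andP; split; lra.
  have := opt_step ho hd; rewrite -/K -/g => H.
  have : dl * (K + 1) <= g by nra.
  nra.
Qed.
End L.

Section M.
Variable R : realType.

Lemma card_sumR (I : finType) (P : pred I) : \sum_i (if P i then 1 else 0) = #|[set i | P i]|%:R :> R.
Proof.
have -> : #|[set i | P i]|%:R = \sum_(i in [set i | P i]) (1:R) by rewrite sumr_const.
rewrite [RHS]big_mkcond /=; apply: eq_bigr => i _; rewrite inE; by case: (P i).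
Qed.

Lemma natz (n : nat) : (n%:R : R) = (n%:Z)%:~R.
Proof. by []. Qed.

Lemma flip_sum m (y yt : 'I_m -> R) : pm1 y -> pm1 yt ->
  \sum_i (1 - y i * yt i) = 2 * #|[set i | yt i != y i]|%:R.
Proof.
move=> hy hyt; rewrite -card_sumR mulr_sumr; apply: eq_bigr => i _.
case: (hy i) => ->; case: (hyt i) => ->.
- by rewrite eqxx /=; lra.
- have -> : (-1 != 1 :> R) by rewrite eq_sym -subr_eq0 opprK (_ : 1 + 1 = 2%:R :> R) ?pnatr_eq0.
  by lra.
- have -> : (1 != -1 :> R) by rewrite -subr_eq0 opprK (_ : 1 + 1 = 2%:R :> R) ?pnatr_eq0.
  by lra.
- by rewrite eqxx /=; lra.
Qed.

Lemma norm_bound m (C : R) (z w : 'I_m -> R) : (forall i, `|z i| <= C) ->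
  `|\sum_i z i * w i| <= \sum_i C * `|w i|.
Proof.
move=> hz; apply: le_trans (ler_norm_sum _ _ _) _.
apply: ler_sum => i _; rewrite normrM; apply: ler_wpM2r => //.
Qed.

Lemma max_exists (P : nat -> Prop) B n0 : P n0 -> (forall n, P n -> n <= B)%N ->
  exists N, P N /\ forall n, P n -> (n <= N)%N.
Proof.
move=> h0 hB.
suff : forall d k, P k -> (B - k <= d)%N -> exists N, P N /\ forall n, P n -> (n <= N)%N.
  by move=> /(_ (B - n0)%N n0 h0 (leqnn _)).
elim=> [|d IH] k hk hd.
  exists k; split=> // n hn; apply: leq_trans (hB _ hn) _.
  by move: hd; lia.
case: (Classical_Prop.classic (exists n, P n /\ (k < n)%N)) => [[n [hn hkn]]|hno].
  apply: (IH n hn); move: (hB _ hn) hd hkn; lia.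
exists k; split=> // n hn; rewrite leqNgt; apply/negP => hkn.
by apply: hno; exists n.
Qed.
End M.

Lemma normpm1 (R : realType) m (v : 'I_m -> R) i : pm1 v -> `|v i| = 1.
Proof. by move=> h; case: (h i) => ->; rewrite ?normrN normr1. Qed.

Ltac splitall := repeat (match goal with
  | |- is_true (_ && _) => apply/andP; split
  | |- _ /\ _ => split
  | |- and3 _ _ _ => split
  | |- and4 _ _ _ _ => split
  | |- and5 _ _ _ _ _ => split end).


Lemma feas_i (R : realType) m (C : R) (Q : 'M[R]_m) (yt0 a0 g : 'I_m -> R) i :
 0 < C -> pm1 yt0 -> 0 <= a0 i -> a0 i <= C -> (a0 i < C -> 0 <= g i) -> (0 < a0 i -> g i <= 0) ->
 - \sum_j C * `|Q i j| <= g i + 1 -> g i + 1 <= \sum_j C * `|Q i j| ->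
 [/\ yt0 i = 2 * ((yt0 i + 1) / 2) - 1,
     g i + 1 - 1 - Num.max (g i) 0 + Num.max (- g i) 0 = 0, 0 <= Num.max (g i) 0,
      0 <= Num.max (- g i) 0
    & [/\ - a0 i <= yt0 i * a0 i <= a0 i,
          a0 i - C * (1 - yt0 i) <= yt0 i * a0 i <= C * (1 + yt0 i) - a0 i,
          Num.max (g i) 0 <=
          (\sum_(j < m) C * `|Q i j| - 1) * (if a0 i == 0 then 1 else 0) /\
          a0 i <= C * (1 - (if a0 i == 0 then 1 else 0))
        & Num.max (- g i) 0 <=
          (\sum_(j < m) C * `|Q i j| + 1) * (if a0 i == C then 1 else 0) /\
          C * (if a0 i == C then 1 else 0) <= a0 i]].
Proof.
move=> hC hyt ha0 haC hk1 hk2 hl hr.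
have hy1 : yt0 i = 2 * ((yt0 i + 1) / 2) - 1 by lra.
case: (eqVneq (a0 i) 0) => h0.
  have hlt : a0 i < C by lra.
  have hg := hk1 hlt.
  have hC' : (a0 i == C) = false by rewrite h0 eq_sym gt_eqF.
  rewrite hC' (max_l hg) (@max_r _ _ (- g i) 0); last by lra.
  rewrite h0; case: (hyt i) => ->; splitall; lra.
have hpos : 0 < a0 i by rewrite lt_neqAle eq_sym h0 ha0.
have hg := hk2 hpos.
rewrite (@max_r _ _ (g i) 0) // (@max_l _ _ (- g i) 0); last by lra.
case: (eqVneq (a0 i) C) => h1.
  by rewrite h1; case: (hyt i) => ->; splitall; lra.
have hlt : a0 i < C by rewrite lt_neqAle h1 haC.
have hg' := hk1 hlt.
have -> : g i = 0 by lra.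
by case: (hyt i) => ->; splitall; lra.
Qed.

Unset Implicit Arguments. Set Strict Implicit.

Theorem theorem2 (R : realType) (m : nat) (T : finType) (C eps : R)
    (y : 'I_m -> R) (Q : 'M[R]_m) (Qt : T -> 'I_m -> R) (alpha_star : 'I_m -> R) :
  (0 < m)%N -> 0 < C -> 0 <= eps <= 1 -> pm1 y -> sym_psd Q ->
  svm_opt C Q y alpha_star ->
  let phat t := \sum_i y i * alpha_star i * Qt t i in
  (forall t, phat t != 0) ->
  exists N : nat,
    (* N is the maximum number of simultaneously non-robust test nodes *)
    ((exists yt a, adm eps y yt /\ svm_opt C Q yt a /\ n_nonrobust Qt phat yt a = N)
     /\ (forall yt a, adm eps y yt -> svm_opt C Q yt a -> (n_nonrobust Qt phat yt a <= N)%N))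
    /\
    (* N is the optimal value of the MILP P_C(y) *)
    ((exists alpha yt z u v yp s tt Rm c p,
        PC_feasible C eps y Q Qt phat alpha yt z u v yp s tt Rm c p
        /\ \sum_t c t = N%:R)
     /\ (forall alpha yt z u v yp s tt Rm c p,
        PC_feasible C eps y Q Qt phat alpha yt z u v yp s tt Rm c p ->
        \sum_t c t <= N%:R)).
Proof.
move=> hm hC heps hy [Qtr Qpsd] hopt phat hphat.
have Qsym : forall i j, Q j i = Q i j by move=> i j; rewrite -{1}Qtr mxE.
pose P n := exists yt a, adm eps y yt /\ svm_opt C Q yt a /\ n_nonrobust Qt phat yt a = n.
have hb0 : 0 <= budget m eps.
  by rewrite /budget floor_ge0; apply: mulr_ge0; [case/andP: heps | rewrite ler0n].
have P0 : P (n_nonrobust Qt phat y alpha_star).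
  exists y, alpha_star; split=> //; split=> //.
  have -> : [set i | y i != y i] = set0 by apply/setP => i; rewrite !inE eqxx.
  by rewrite cards0.
have PB : forall n, P n -> (n <= #|T|)%N.
  by move=> n [yt [a [_ [_ <-]]]]; exact: max_card.
have [N [[yt0 [a0 [hadm0 [hopt0 hN]]]] hmax]] := max_exists P0 PB.
exists N; split.
  split; first by exists yt0, a0.
  by move=> yt a h1 h2; apply: hmax; exists yt, a.
split.
- case: hadm0 => hyt hbud.
  have hk := opt_kkt Qsym Qpsd hopt0.
  have hbox := hopt0.1.
  pose g := grad Q yt0 a0.
  exists a0, yt0, (fun i => yt0 i * a0 i), (fun i => Num.max (g i) 0),
    (fun i => Num.max (- g i) 0), (fun i => (yt0 i + 1) / 2),
    (fun i => if a0 i == 0 then 1 else 0), (fun i => if a0 i == C then 1 else 0),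
    (fun i j => yt0 i * (yt0 j * a0 j)),
    (fun t => if Num.sg (phat t) * (\sum_i yt0 i * a0 i * Qt t i) <= 0 then 1 else 0),
    (fun t => \sum_i yt0 i * a0 i * Qt t i).
  split; last by rewrite card_sumR -hN.
  split.
  + move=> i; rewrite /binR; split; [|split].
    * by case: (hyt i) => ->; [right|left]; lra.
    * by case: (a0 i == 0); [right|left].
    * by case: (a0 i == C); [right|left].
  + rewrite flip_sum //; move: hbud; rewrite -(ler_int R) -natz; lra.
  + move=> i.
    have hsumR : \sum_j yt0 i * (yt0 j * a0 j) * Q i j = g i + 1.
      rewrite /g /grad mulr_sumr subrK.
      by apply: eq_bigr => j _; ring.
    have hgb : `|g i + 1| <= \sum_j C * `|Q i j|.
      rewrite -hsumR; apply: norm_bound => j.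
      case/andP: (hbox j) => h0 h1.
      by rewrite !normrM !(normpm1 _ hyt) !mul1r ger0_norm.
    move: hgb; rewrite ler_norml => /andP[hl hr].
    have hmx := hk i; rewrite -/g in hmx; case: hmx => hk1 hk2.
    move: (hbox i) => /andP[ha0 haC].
    rewrite /= hsumR.
    exact: feas_i.
  + move=> i j.
    move: (hbox j) => /andP[ha0 haC].
    by case: (hyt i) => ->; case: (hyt j) => ->; splitall; lra.
  + move=> t.
    set S := \sum_i yt0 i * a0 i * Qt t i.
    have hb : `|S| <= C * \sum_i `|Qt t i|.
      rewrite mulr_sumr /S; apply: (@norm_bound R m C (fun i => yt0 i * a0 i) (Qt t)) => i.
      case/andP: (hbox i) => h0 h1.
      by rewrite normrM (normpm1 _ hyt) mul1r ger0_norm.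
    move: hb; rewrite ler_norml => /andP[hl hr].
    split.
    { by rewrite /binR; case: (_ <= 0); [right|left]. }
    { by []. }
    { move=> hp; rewrite (gtr0_sg hp) mul1r; case: (lerP S 0) => h; split; lra. }
    { move=> hp; rewrite (ltr0_sg hp) mulN1r; case: (lerP (- S) 0) => h; split; lra. }
- move=> alpha yt z u v yp s tt Rm c p [hbin hbud hi hR ht].
  have hyt : pm1 yt.
    move=> i; case: (hi i) => -> _ _ _ _.
    by case: (hbin i) => [[h|h] _]; rewrite h; [right|left]; lra.
  have hz : forall i, z i = yt i * alpha i.
    move=> i; case: (hi i) => _ _ _ _ [/andP[h1 h2] /andP[h3 h4] _ _].
    by case: (hyt i) => e; rewrite e in h3 h4 *; lra.
  have hbox : in_box C alpha.
    move=> i; case: (hi i) => _ _ _ _ [/andP[h1 h2] _ [_ h5] _].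
    by case: (hbin i) => [_ [[e|e] _]]; rewrite e in h5; apply/andP; split; lra.
  have hRm : forall i j, Rm i j = yt i * z j.
    move=> i j; case: (hR i j) => /andP[h1 h2] /andP[h3 h4].
    by case: (hyt i) => e; rewrite e in h1 h2 h3 h4 *; lra.
  have hg : forall i, grad Q yt alpha i = u i - v i.
    move=> i; case: (hi i) => _ he _ _ _.
    have : \sum_j Rm i j * Q i j = grad Q yt alpha i + 1.
      rewrite /grad subrK mulr_sumr; apply: eq_bigr => j _; rewrite hRm hz; ring.
    lra.
  have hk : kkt Q C yt alpha.
    move=> i; rewrite hg; case: (hi i) => _ _ hu hv [_ _ [hus has] [hvt hat]].
    case: (hbin i) => [_ [[es|es] [et|et]]]; rewrite es et /= in hus has hvt hat;
      split=> h; lra.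
  have hopt' := kkt_opt Qsym Qpsd hbox hk.
  have hadm : adm eps y yt.
    split=> //; rewrite -(ler_int R) -natz; move: hbud; rewrite flip_sum //; lra.
  have hN' := hmax _ (ex_intro _ yt (ex_intro _ alpha (conj hadm (conj hopt' erefl)))).
  apply: (@le_trans _ _ (n_nonrobust Qt phat yt alpha)%:R); last by rewrite ler_nat.
  rewrite /n_nonrobust -card_sumR; apply: ler_sum => t _.
  case: (ht t) => hc hp hpos hneg.
  case: hc => ec; rewrite ec; first by case: (_ <= 0).
  rewrite ec in hpos hneg.
  have hpe : p t = \sum_i yt i * alpha i * Qt t i.
    by rewrite hp; apply: eq_bigr => i _; rewrite hz.
  have := hphat t; rewrite neq_lt => /orP[hn|hn].
    rewrite (ltr0_sg hn) mulN1r -hpe; have [h1 h2] := hneg hn.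
    by have -> : (- p t <= 0) = true by apply/idP; lra.
  rewrite (gtr0_sg hn) mul1r -hpe; have [h1 h2] := hpos hn.
  by have -> : (p t <= 0) = true by apply/idP; lra.
Qed.
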